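(* Let $i\in\{1,2\}$ and let $(X,e,\mu)$ be an $\mathrm{NP}_i$-digital H-space with $X$ $\mathrm{NP}_i$-irreducible. Then for every $x\in X_e$, the maps $\mu_x$ and $\nu_x$ are isomorphisms $X\to X$.
   Context: A digital image is a finite set $X\subset\mathbb{Z}^n$ with a reflexive symmetric adjacency relation (a finite reflexive graph); continuous maps send adjacent points to adjacent points; an isomorphism is a continuous bijection with continuous inverse. On products, $\mathrm{NP}_u$ declares two tuples adjacent iff coordinates are adjacent in at most $u$ positions and equal elsewhere. An $\mathrm{NP}_i$-homotopy from $f$ to $g:X\to Y$ is an $\mathrm{NP}_i$-continuous $H:X\times[0,m]_{\mathbb{Z}}\to Y$ with $H(\cdot,0)=f$, $H(\cdot,m)=g$; write $f\simeq_i g$. $X$ is $\mathrm{NP}_i$-irreducible if it is not $\mathrm{NP}_i$-homotopy equivalent to a digital image with fewer points. $(f,g)(x)=(f(x),g(x))$; $c_e$ is constant at $e$. An $\mathrm{NP}_i$-digital H-space is $(X,e,\mu)$ with $\mu:X\times X\to X$ $\mathrm{NP}_i$-continuous, $\mu\circ(\mathrm{id}_X,c_e)\simeq_i\mathrm{id}_X$, $\mu\circ(c_e,\mathrm{id}_X)\simeq_i\mathrm{id}_X$ (homotopies need not be pointed). $\mu_x(y)=\mu(x,y)$, $\nu_x(y)=\mu(y,x)$; $X_e$ is the connected component of $e$. *)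

(* Defs.v *)
From mathcomp Require Export all_boot.
Set Implicit Arguments. Unset Strict Implicit. Unset Printing Implicit Defensive.

Definition digital_image (X : finType) (a : rel X) : Prop :=
  reflexive a /\ symmetric a.

Definition dcontinuous (X Y : finType) (aX : rel X) (aY : rel Y) (f : X -> Y) : Prop :=
  forall x y, aX x y -> aY (f x) (f y).

Definition NPadj (u : nat) (X Y : finType) (aX : rel X) (aY : rel Y) : rel (X * Y) :=
  fun p q => [&& aX p.1 q.1, aY p.2 q.2 & ((p.1 != q.1) + (p.2 != q.2) <= u)%N].

(* the digital interval [0,m]_Z with c_1 adjacency, as 'I_m.+1 *)
Definition intadj (m : nat) : rel 'I_m.+1 :=
  fun s t => ((s <= t.+1) && (t <= s.+1))%N.

Definition NPhomotopic (i : nat) (X Y : finType) (aX : rel X) (aY : rel Y)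
  (f g : X -> Y) : Prop :=
  exists (m : nat) (H : X * 'I_m.+1 -> Y),
    dcontinuous (NPadj i aX (@intadj m)) aY H /\
    (forall x, H (x, ord0) = f x) /\ (forall x, H (x, ord_max) = g x).

Definition NPhequiv (i : nat) (X Y : finType) (aX : rel X) (aY : rel Y) : Prop :=
  exists (f : X -> Y) (g : Y -> X),
    dcontinuous aX aY f /\ dcontinuous aY aX g /\
    NPhomotopic i aX aX (g \o f) id /\ NPhomotopic i aY aY (f \o g) id.

Definition NPirreducible (i : nat) (X : finType) (aX : rel X) : Prop :=
  forall (Y : finType) (aY : rel Y), digital_image aY -> (#|Y| < #|X|)%N ->
    ~ NPhequiv i aX aY.

Definition NPHspace (i : nat) (X : finType) (aX : rel X) (e : X) (mu : X * X -> X) : Prop :=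
  dcontinuous (NPadj i aX aX) aX mu /\
  NPhomotopic i aX aX (fun x => mu (x, e)) id /\
  NPhomotopic i aX aX (fun x => mu (e, x)) id.

Definition disomorphism (X Y : finType) (aX : rel X) (aY : rel Y) (f : X -> Y) : Prop :=
  exists g : Y -> X, cancel f g /\ cancel g f /\ dcontinuous aX aY f /\ dcontinuous aY aX g.

(* Main.v *)
Require Import Defs.
From mathcomp Require Import all_boot.
From mathcomp Require Import zify.
From Stdlib Require Import Relation_Operators Operators_Properties Classical FunctionalExtensionality.
Set Implicit Arguments. Unset Strict Implicit. Unset Printing Implicit Defensive.

Definition step (i : nat) (X : finType) (a : rel X) (f g : X -> X) : Prop :=
  dcontinuous a a f /\ dcontinuous a a g /\
  (forall x y, a x y -> ((x != y) + 1 <= i)%N -> a (f x) (g y)).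

Lemma b1le (b : bool) (i n : nat) : (n + 1 <= i)%N -> (n + b <= i)%N.
Proof. move=> h; apply: leq_trans h; rewrite leq_add2l; exact: leq_b1. Qed.

Lemma homot_to_crt (i : nat) (X : finType) (a : rel X) (f g : X -> X) :
  (1 <= i)%N -> NPhomotopic i a a f g -> clos_refl_trans _ (step i a) f g.
Proof.
move=> i1 [m [H [HC [H0 H1]]]].
pose h k := fun x => H (x, inord k).
have sl : forall k, dcontinuous a a (h k).
  move=> k x y axy; apply: HC; rewrite /NPadj /= axy /intadj leqnSn /= eqxx addn0.
  by apply: leq_trans i1; exact: leq_b1.
have st : forall k, (k < m)%N -> step i a (h k) (h k.+1).
  move=> k km; split; first exact: sl; split; first exact: sl.
  move=> x y axy c; apply: HC; rewrite /NPadj /= axy /intadj.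
  have k1 : (k <= m)%N by exact: ltnW.
  rewrite !inordK ?ltnS // leqW ?leqnSn //=.
  rewrite leqnn /=; exact: b1le.
have ch : forall k, (k <= m)%N -> clos_refl_trans _ (step i a) (h 0) (h k).
  elim=> [|k IH] km; first exact: rt_refl.
  apply: rt_trans (IH (ltnW km)) _; apply: rt_step; exact: st.
have e0 : h 0 = f.
  apply: functional_extensionality => x; rewrite /h -H0; congr H; congr pair.
  by apply: val_inj; rewrite /= inordK.
have em : h m = g.
  apply: functional_extensionality => x; rewrite /h -H1; congr H; congr pair.
  by apply: val_inj; rewrite /= inordK.
by rewrite -e0 -em; apply: ch.
Qed.

Lemma step_homot (i : nat) (X : finType) (a : rel X) (f h g : X -> X) :
  symmetric a -> step i a f h -> NPhomotopic i a a h g -> NPhomotopic i a a f g.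
Proof.
move=> sa [cf [ch cr]] [m [H [HC [H0 H1]]]].
pose Hn (x : X) (n : nat) := if n is n'.+1 then H (x, inord n') else f x.
exists m.+1, (fun p => Hn p.1 (val p.2)); split; last split.
- move=> [x s] [y t] /and3P [/= axy st c].
  rewrite /intadj in st; rewrite -val_eqE in c.
  case: s st c => [[|s] sm]; case: t => [[|t] tm];
    move=> st c; move: st c; rewrite [Hn _ _]/= [Hn y _]/= /= => st c.
  + exact: cf.
  + have t0 : t = 0.
      by apply/eqP; rewrite -leqn0 -ltnS.
    subst t; have -> : (inord 0 : 'I_m.+1) = ord0 by apply: val_inj; rewrite /= inordK.
    rewrite H0; apply: cr => //.
  + have s0 : s = 0.
      by move: st => /andP [st _]; apply/eqP; rewrite -leqn0 -ltnS.
    subst s; have -> : (inord 0 : 'I_m.+1) = ord0 by apply: val_inj; rewrite /= inordK.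
    rewrite H0 sa; apply: cr; first by rewrite sa.
    by rewrite eq_sym.
  + apply: HC; rewrite /NPadj axy.
    change ([&& true, intadj (inord s : 'I_m.+1) (inord t) & (x != y) + ((inord s : 'I_m.+1) != inord t) <= i]).
    have e : ((inord s : 'I_m.+1) != inord t) = (s != t).
      congr negb; apply/eqP/eqP => [hh|->//].
      by have := congr1 (@nat_of_ord _) hh; rewrite !inordK // -ltnS.
    have s1 : (s <= m)%N by rewrite -ltnS.
    have t1 : (t <= m)%N by rewrite -ltnS.
    rewrite e /intadj (inordK s1) (inordK t1).
    rewrite !ltnS in st; rewrite st c.
    by [].
- by move=> x.
- move=> x /=; rewrite -H1; congr H; congr pair.
  by apply: val_inj; rewrite /= inordK.
Qed.

Lemma crt_to_homot (i : nat) (X : finType) (a : rel X) (f g : X -> X) :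
  symmetric a -> clos_refl_trans _ (step i a) f g -> dcontinuous a a f ->
  NPhomotopic i a a f g.
Proof.
move=> sa /clos_rt_rt1n_iff; elim=> [f0|f0 h0 g0 st _ IH] cf.
  exists 0, (fun p => f0 p.1); split; last by [].
  by move=> [x s] [y t] /and3P [/= axy _ _]; exact: cf.
have [_ [ch _]] := st; exact: step_homot sa st (IH ch).
Qed.

Lemma step_comp (i : nat) (X : finType) (a : rel X) (F f g : X -> X) :
  dcontinuous a a F -> step i a f g -> step i a (F \o f) (F \o g).
Proof.
move=> cF [cf [cg cr]]; split; last split.
- by move=> x y h; apply: cF; apply: cf.
- by move=> x y h; apply: cF; apply: cg.
- by move=> x y h c; apply: cF; apply: cr.
Qed.

Lemma crt_comp (i : nat) (X : finType) (a : rel X) (F f g : X -> X) :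
  dcontinuous a a F -> clos_refl_trans _ (step i a) f g ->
  clos_refl_trans _ (step i a) (F \o f) (F \o g).
Proof.
move=> cF; elim=> [f0 g0 st|f0|f0 g0 h0 _ IH1 _ IH2].
- by apply: rt_step; apply: step_comp.
- exact: rt_refl.
- exact: rt_trans IH1 IH2.
Qed.

Lemma iter_cont (X : finType) (a : rel X) (f : X -> X) n :
  reflexive a -> dcontinuous a a f -> dcontinuous a a (iter n f).
Proof.
move=> ra cf; elim: n => [|n IH] x y h /=; first by [].
by apply: cf; apply: IH.
Qed.

Lemma iter_crt (i : nat) (X : finType) (a : rel X) (f : X -> X) n :
  dcontinuous a a f -> clos_refl_trans _ (step i a) f id ->
  clos_refl_trans _ (step i a) (iter n f) id.
Proof.
move=> cf h; elim: n => [|n IH].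
  have -> : iter 0 f = id by apply: functional_extensionality.
  exact: rt_refl.
have -> : iter n.+1 f = f \o iter n f by apply: functional_extensionality.
apply: rt_trans (crt_comp cf IH) _.
exact: h.
Qed.

Lemma cont_bij_iso (X : finType) (a : rel X) (f : X -> X) :
  dcontinuous a a f -> (forall y, exists x, f x == y) -> disomorphism a a f.
Proof.
move=> cf sf.
pose g y := xchoose (sf y).
have gK : cancel g f by move=> y; apply/eqP; exact: (xchooseP (sf y)).
have [h gh hg] := injF_bij (can_inj gK).
have fK : cancel f g.
  move=> x; rewrite -[x in f x](hg x) gK; exact: hg.
exists g; split; first exact: fK; split; first exact: gK; split; first exact: cf.
pose S := [set p : X * X | a p.1 p.2].
pose Fp (p : X * X) := (f p.1, f p.2).
have Fi : injective Fp.
  move=> [x1 x2] [y1 y2] [e1 e2].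
  by rewrite -(fK x1) -(fK x2) e1 e2 !fK.
have sub : Fp @: S \subset S.
  apply/subsetP => q /imsetP [p]; rewrite inE => hp ->.
  by rewrite inE /=; apply: cf.
have eS : Fp @: S = S.
  by apply/eqP; rewrite eqEcard sub (card_imset _ Fi) leqnn.
move=> u v huv.
have : (u, v) \in Fp @: S by rewrite eS inE.
case/imsetP => [[p1 p2]]; rewrite inE /= => hp [-> ->].
by rewrite !fK.
Qed.

Lemma arith1 (a b c : nat) : (a + (b + c) = c + (a + b))%N.
Proof. lia. Qed.

Lemma surj_of_htpy (i : nat) (X : finType) (a : rel X) (f : X -> X) :
  (1 <= i)%N -> digital_image a -> NPirreducible i a -> dcontinuous a a f ->
  clos_refl_trans _ (step i a) f id -> forall y, exists x, f x == y.
Proof.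
move=> i1 [ra sa] irr cf hf.
apply: NNPP => hn; have [z hz] := not_all_ex_not _ _ hn.
have [n en] : {n : nat | n = #|{ffun X -> X}|} by exists #|{ffun X -> X}|.
pose F (k : 'I_n.+1) : {ffun X -> X} := [ffun x => iter k f x].
have nI : ~ injective F.
  by move=> Fi; have := leq_card F Fi; rewrite card_ord -en ltnn.
have [k1 [k2 [e ne]]] : exists k1 k2, F k1 = F k2 /\ k1 <> k2.
  apply: NNPP => hh; apply: nI => k1 k2 e; apply: NNPP => ne; apply: hh.
  by exists k1, k2.
have ex : forall x, iter k1 f x = iter k2 f x.
  by move=> x; have := congr1 (fun G : {ffun X -> X} => G x) e; rewrite !ffunE.
have [p [d [d1 hp]]] : exists p d, (0 < d)%N /\ forall x, iter (p + d) f x = iter p f x.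
  case: (ltngtP k1 k2) => hk.
  - exists k1, (k2 - k1); split; first by rewrite subn_gt0.
    move=> x; rewrite subnKC; [exact: esym (ex x) | exact: ltnW].
  - exists k2, (k1 - k2); split; first by rewrite subn_gt0.
    move=> x; rewrite subnKC; [exact: ex | exact: ltnW].
  - by exfalso; apply: ne; apply: val_inj.
have per : forall k x, iter (p + k * d) f x = iter p f x.
  elim=> [|k IH] x; first by rewrite mul0n addn0.
  have -> : (p + k.+1 * d = k * d + (p + d))%N by rewrite mulSn arith1.
  by rewrite iterD hp -iterD addnC IH.
have [N eN] : {N : nat | N = (p.+1 * d)%N} by exists (p.+1 * d)%N.
have pN : (p <= N)%N by rewrite eN; apply: leq_trans (leqnSn p) _; rewrite leq_pmulr.
have N1 : (0 < N)%N by rewrite eN muln_gt0 d1.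
pose g := iter N f.
have gi : forall x, g (g x) = g x.
  move=> x; rewrite /g -iterD.
  have -> : (N + N = (N - p) + (p + N))%N by rewrite addnA (subnK pN).
  by rewrite iterD {2}eN (per p.+1 x) -iterD (subnK pN).
have gz : forall x, g x != z.
  move=> x; apply/negP => /eqP gx; apply: hz; exists (iter N.-1 f x).
  by rewrite -gx /g -iterS prednK.
pose Y : finType := {x : X | g x == x}.
pose aY : rel Y := fun u v => a (val u) (val v).
have dY : digital_image aY.
  by split; [move=> u; exact: ra | move=> u v; exact: sa].
have cY : (#|Y| < #|X|)%N.
  rewrite card_sig -(cardC [pred x | g x == x]).
  rewrite -[X in (X < _)%N]addn0 ltn_add2l; apply/card_gt0P; exists z.
  exact: (gz z).
apply: (irr Y aY dY cY).
pose F' (x : X) : Y := exist (fun y => g y == y) (g x) (introT eqP (gi x)).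
have cg : dcontinuous a a g by apply: iter_cont.
exists F', val; split; last split; last split.
- by move=> x y h; apply: cg.
- by move=> u v h.
- have -> : val \o F' = g by apply: functional_extensionality.
  apply: crt_to_homot => //; exact: iter_crt.
- exists 0, (fun p => p.1); split; last split.
  + by move=> [u s] [v t] /and3P [h _ _].
  + move=> u /=; apply: val_inj => /=; symmetry; apply/eqP; exact: (valP u).
  + by [].
Qed.

Lemma mu_stepl (i : nat) (X : finType) (a : rel X) (mu : X * X -> X) (c c' : X) :
  (1 <= i)%N -> digital_image a -> dcontinuous (NPadj i a a) a mu -> a c c' ->
  step i a (fun y => mu (c, y)) (fun y => mu (c', y)).
Proof.
move=> i1 [ra sa] cmu acc; split; last split.
- move=> z z' h; apply: cmu; rewrite /NPadj /= ra h eqxx /= add0n.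
  exact: leq_trans (leq_b1 _) i1.
- move=> z z' h; apply: cmu; rewrite /NPadj /= ra h eqxx /= add0n.
  exact: leq_trans (leq_b1 _) i1.
- move=> z z' h c1; apply: cmu; rewrite /NPadj /= acc h /=.
  rewrite addnC; apply: b1le; exact: c1.
Qed.

Lemma mu_stepr (i : nat) (X : finType) (a : rel X) (mu : X * X -> X) (c c' : X) :
  (1 <= i)%N -> digital_image a -> dcontinuous (NPadj i a a) a mu -> a c c' ->
  step i a (fun y => mu (y, c)) (fun y => mu (y, c')).
Proof.
move=> i1 [ra sa] cmu acc; split; last split.
- move=> z z' h; apply: cmu; rewrite /NPadj /= ra h eqxx /= addn0.
  exact: leq_trans (leq_b1 _) i1.
- move=> z z' h; apply: cmu; rewrite /NPadj /= ra h eqxx /= addn0.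
  exact: leq_trans (leq_b1 _) i1.
- move=> z z' h c1; apply: cmu; rewrite /NPadj /= acc h /=.
  apply: b1le; exact: c1.
Qed.

Lemma chainl (i : nat) (X : finType) (a : rel X) (mu : X * X -> X) :
  (1 <= i)%N -> digital_image a -> dcontinuous (NPadj i a a) a mu ->
  forall p s, path a s p ->
  clos_refl_trans _ (step i a) (fun y => mu (last s p, y)) (fun y => mu (s, y)).
Proof.
move=> i1 [ra sa] cmu; elim=> [|y0 p IH] s /=; first by move=> _; apply: rt_refl.
case/andP => h1 h2; apply: rt_trans (IH _ h2) _; apply: rt_step.
apply: mu_stepl => //; by rewrite sa.
Qed.

Lemma chainr (i : nat) (X : finType) (a : rel X) (mu : X * X -> X) :
  (1 <= i)%N -> digital_image a -> dcontinuous (NPadj i a a) a mu ->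
  forall p s, path a s p ->
  clos_refl_trans _ (step i a) (fun y => mu (y, last s p)) (fun y => mu (y, s)).
Proof.
move=> i1 [ra sa] cmu; elim=> [|y0 p IH] s /=; first by move=> _; apply: rt_refl.
case/andP => h1 h2; apply: rt_trans (IH _ h2) _; apply: rt_step.
apply: mu_stepr => //; by rewrite sa.
Qed.

Theorem mainTheorem8 (i : nat) (X : finType) (a : rel X) (e : X) (mu : X * X -> X) :
  (i = 1 \/ i = 2) ->
  digital_image a ->
  NPHspace i a e mu ->
  NPirreducible i a ->
  forall x : X, connect a e x ->
    disomorphism a a (fun y => mu (x, y)) /\ disomorphism a a (fun y => mu (y, x)).
Proof.
move=> hi dI [cmu [hr hl]] irr x /connectP [p pth ->].
have i1 : (1 <= i)%N by case: hi => ->.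
have [ra sa] := dI.
split.
- have st := mu_stepl i1 dI cmu (ra (last e p)).
  have cf := st.1.
  apply: cont_bij_iso => //.
  apply: (surj_of_htpy i1 dI irr cf).
  apply: rt_trans (chainl i1 dI cmu pth) _.
  exact: homot_to_crt i1 hl.
- have st := mu_stepr i1 dI cmu (ra (last e p)).
  have cf := st.1.
  apply: cont_bij_iso => //.
  apply: (surj_of_htpy i1 dI irr cf).
  apply: rt_trans (chainr i1 dI cmu pth) _.
  exact: homot_to_crt i1 hr.
Qed.
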